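(* Let $n=4$, let $A$ be an irreducible $4\times 4$ Dickson matrix over $\mathbb{F}_{q^4}$ and let $B$ be a $4\times4$ Dickson matrix such that $A$ and $B$ have equal corresponding principal minors. Then $B$ is diagonally similar to $A$ or to $A^T$.
   Context: A Dickson matrix is the $n\times n$ matrix indexed by $\mathbb{Z}_n$ with $A[i|j]=a_{j-i}^{q^i}$ (indices mod $n$) associated to a $q$-polynomial $\sum_{j=0}^{n-1}a_jx^{q^j}\in\mathbb{F}_{q^n}[x]$. $A$ is reducible if there is a partition $\{\alpha,\beta\}$ of $\mathbb{Z}_n$ into nonempty sets with $A[\alpha|\beta]=0$ (rows $\alpha$, columns $\beta$), irreducible otherwise. Equal corresponding principal minors: $\det A[\alpha|\alpha]=\det B[\alpha|\alpha]$ for all nonempty $\alpha$. Diagonally similar: $B=D^{-1}AD$ with $D$ invertible diagonal. *)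

(* Defs.v *)
From HB Require Import structures.
From mathcomp Require Import all_boot all_order all_algebra all_fingroup all_field.
Set Implicit Arguments. Unset Strict Implicit. Unset Printing Implicit Defensive.
Import GRing.Theory.
Local Open Scope ring_scope.

(* Indices of an n x n matrix with n = k.+1 are 'I_k.+1, which carries the
   additive group structure of Z/nZ; (j - i) is subtraction mod n. *)

(* Dickson matrix of the q-polynomial sum_j a_j x^(q^j):
   A[i|j] = a_{j-i}^(q^i). *)
Definition dickson_mx (F : fieldType) (q k : nat) (a : 'I_k.+1 -> F)
  : 'M[F]_k.+1 := \matrix_(i, j) (a (j - i)) ^+ (q ^ i).

Definition reducible_mx (F : fieldType) (n : nat) (A : 'M[F]_n) : Prop :=
  exists alpha : {set 'I_n},
    [/\ alpha != set0, ~: alpha != set0 &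
        forall i j, i \in alpha -> j \notin alpha -> A i j = 0].

Definition irreducible_mx (F : fieldType) (n : nat) (A : 'M[F]_n) : Prop :=
  ~ reducible_mx A.

Definition principal_submx (F : fieldType) (n : nat) (A : 'M[F]_n)
  (alpha : {set 'I_n}) : 'M[F]_#|alpha| :=
  \matrix_(i, j) A (enum_val i) (enum_val j).

Definition equal_principal_minors (F : fieldType) (n : nat) (A B : 'M[F]_n) :=
  forall alpha : {set 'I_n}, alpha != set0 ->
    \det (principal_submx A alpha) = \det (principal_submx B alpha).

Definition diag_similar (F : fieldType) (n : nat) (A B : 'M[F]_n) :=
  exists D : 'M[F]_n, [/\ is_diag_mx D, D \in unitmx & B = invmx D *m A *m D].

(* Main.v *)
Require Import Defs.
From HB Require Import structures.
From mathcomp Require Import all_boot all_order all_algebra all_fingroup all_field.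
From mathcomp Require Import ring.
Set Implicit Arguments. Unset Strict Implicit. Unset Printing Implicit Defensive.
Import GRing.Theory.
Local Open Scope ring_scope.

Section Det.
Variable R : comRingType.
Definition det2f (G : nat -> nat -> R) := G 0%N 0%N * G 1%N 1%N - G 0%N 1%N * G 1%N 0%N.
Definition det3f (G : nat -> nat -> R) :=
  G 0%N 0%N * det2f (fun x y => G x.+1 y.+1)
  - G 0%N 1%N * det2f (fun x y => G x.+1 (bump 1 y))
  + G 0%N 2%N * det2f (fun x y => G x.+1 (bump 2 y)).
Definition det4f (G : nat -> nat -> R) :=
  G 0%N 0%N * det3f (fun x y => G x.+1 y.+1)
  - G 0%N 1%N * det3f (fun x y => G x.+1 (bump 1 y))
  + G 0%N 2%N * det3f (fun x y => G x.+1 (bump 2 y))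
  - G 0%N 3%N * det3f (fun x y => G x.+1 (bump 3 y)).
Definition Gb (i0 j0 : nat) (G : nat -> nat -> R) x y := G (bump i0 x) (bump j0 y).
Lemma minor_gen k (G : nat -> nat -> R) (i0 j0 : 'I_k.+1) :
  row' i0 (col' j0 (\matrix_(i < k.+1, j < k.+1) G i j)) =
  \matrix_(i < k, j < k) Gb i0 j0 G i j.
Proof. by apply/matrixP => i j; rewrite !mxE. Qed.
Lemma det_gen1 k (G : nat -> nat -> R) : k = 1%N ->
  \det (\matrix_(i < k, j < k) G i j) = G 0%N 0%N.
Proof. by move=> ->; rewrite det_mx11 mxE. Qed.
Lemma det_gen2 k (G : nat -> nat -> R) : k = 2%N ->
  \det (\matrix_(i < k, j < k) G i j) = det2f G.
Proof.
move=> ->; rewrite (expand_det_row _ ord0) !big_ord_recl big_ord0 /cofactor.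
rewrite !minor_gen !(det_gen1 _ (erefl _)) !mxE /det2f /Gb /bump /=.
by rewrite expr0 expr1; ring.
Qed.
Lemma det_gen3 k (G : nat -> nat -> R) : k = 3%N ->
  \det (\matrix_(i < k, j < k) G i j) = det3f G.
Proof.
move=> ->; rewrite (expand_det_row _ ord0) !big_ord_recl big_ord0 /cofactor.
rewrite !minor_gen !(det_gen2 _ (erefl _)) !mxE /det3f /Gb /=.
rewrite /det2f ?/det3f /bump /=. cbv [addn addn_rec leq subn subn_rec Nat.add Nat.sub eq_op]. simpl. rewrite !exprS !expr0. ring.
Qed.
Lemma det_gen4 k (G : nat -> nat -> R) : k = 4%N ->
  \det (\matrix_(i < k, j < k) G i j) = det4f G.
Proof.
move=> ->; rewrite (expand_det_row _ ord0) !big_ord_recl big_ord0 /cofactor.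
rewrite !minor_gen !(det_gen3 _ (erefl _)) !mxE /det4f /Gb /=.
rewrite /det2f ?/det3f /bump /=. cbv [addn addn_rec leq subn subn_rec Nat.add Nat.sub eq_op]. simpl. rewrite !exprS !expr0. ring.
Qed.
End Det.

Definition idx (x y : nat) : nat :=
  nth 0%N (nth [::] [:: [:: 0; 1; 2; 3]; [:: 3; 0; 1; 2]; [:: 2; 3; 0; 1]; [:: 1; 2; 3; 0]]%N x) y.
Lemma sub_idx (i j : 'I_4) : (j - i) = inord (idx i j).
Proof.
case: i => [[|[|[|[|i]]]] Hi]; last by [].
all: case: j => [[|[|[|[|j]]]] Hj]; last by [].
all: try by [].
all: by apply/val_inj; rewrite [RHS]/= inordK.
Qed.
Definition bset (bs : seq bool) : {set 'I_4} := [set x : 'I_4 | nth false bs (val x)].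
Lemma enum4 : enum 'I_4 = [:: inord 0; inord 1; inord 2; inord 3].
Proof. apply: (inj_map val_inj). rewrite val_enum_ord /=. by rewrite !inordK. Qed.
Lemma enum_setE (P : pred 'I_4) : enum [set x | P x] = filter P (enum 'I_4).
Proof. rewrite {1}/enum_mem -enumT /=. apply: eq_filter => x. by rewrite !inE. Qed.
Lemma enum_bset bs : map val (enum (bset bs)) = [seq k <- iota 0 4 | nth false bs k].
Proof. rewrite /bset enum_setE enum4 /= !inordK //=. by case: (nth false bs 0); case: (nth false bs 1); case: (nth false bs 2); case: (nth false bs 3) => /=; rewrite ?inordK. Qed.
Lemma card_bset bs : #|bset bs| = size [seq k <- iota 0 4 | nth false bs k].
Proof. by rewrite cardE -(size_map val) enum_bset. Qed.
Definition MG (F : comRingType) (M : 'M[F]_4) (s : seq nat) (x y : nat) := M (inord (nth 0%N s x)) (inord (nth 0%N s y)).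
Lemma pminorE (F : fieldType) (M : 'M[F]_4) bs :
  \det (principal_submx M (bset bs)) =
  \det (\matrix_(i < #|bset bs|, j < #|bset bs|) MG M [seq k <- iota 0 4 | nth false bs k] i j).
Proof.
have Hs := enum_bset bs; have Hc := card_bset bs.
move: Hs Hc; set s := [seq _ <- _ | _] => Hs Hc.
congr (\det _); apply/matrixP => i j; rewrite !mxE /MG.
suff E (k : 'I_#|bset bs|) : enum_val k = inord (nth 0%N s k) by rewrite !E.
have ks : (k < size s)%N by rewrite -Hc.
have Hk : (nth 0%N s k < 4)%N.
  have : nth 0%N s k \in s by rewrite mem_nth.
  by rewrite mem_filter mem_iota => /andP[_ /andP[_]].
apply/val_inj; rewrite [RHS]/= (inordK Hk).
by rewrite -Hs (nth_map (inord 0)) -?cardE ?(enum_val_nth (inord 0)) // -(size_map val) Hs.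
Qed.

Definition frob (F : ringType) (q : nat) (x : F) := x ^+ q.

Lemma expq_iter (F : comRingType) q n (x : F) : x ^+ (q ^ n) = iter n (frob q) x.
Proof. elim: n => [|n IH]; first by rewrite expn0 expr1. by rewrite expnSr exprM IH. Qed.

Lemma dickE (F : fieldType) q (a : 'I_4 -> F) (i j : 'I_4) :
  dickson_mx q a i j = iter i (frob q) (a (inord (idx i j))).
Proof. by rewrite mxE sub_idx expq_iter. Qed.

Lemma dickI (F : fieldType) q (a : 'I_4 -> F) x y : (x < 4)%N -> (y < 4)%N ->
  dickson_mx q a (inord x) (inord y) = iter x (frob q) (a (inord (idx x y))).
Proof. by move=> hx hy; rewrite dickE !inordK. Qed.

Section Frob.
Variables (F : fieldType) (q : nat) (q0 : (0 < q)%N).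
Local Notation s := (frob q).
Lemma fM (x y : F) : s (x * y) = s x * s y. Proof. exact: exprMn. Qed.
Lemma fV (x : F) : s (x^-1) = (s x)^-1. Proof. exact: exprVn. Qed.
Lemma f0 : s (0 : F) = 0. Proof. by rewrite /frob expr0n; case: q q0. Qed.
Lemma f1 : s (1 : F) = 1. Proof. exact: expr1n. Qed.
Lemma f_eq0 (x : F) : (s x == 0) = (x == 0). Proof. by rewrite /frob expf_eq0 q0. Qed.
Lemma f_neq0 (x : F) : x != 0 -> s x != 0. Proof. by rewrite -f_eq0. Qed.
End Frob.

Lemma dsim_of (F : fieldType) (A B : 'M[F]_4) (d : nat -> F) :
  (forall k, (k < 4)%N -> d k != 0) ->
  (forall i j : 'I_4, d i * B i j = A i j * d j) -> diag_similar A B.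
Proof.
move=> dn0 hij.
pose D := diag_mx (\row_(i < 4) d i).
have DU : D \in unitmx.
  rewrite unitmxE det_diag unitfE; apply/prodf_neq0 => i _; rewrite mxE; exact: dn0.
exists D; split => //; first exact: diag_mx_is_diag.
have e : D *m B = A *m D.
  by apply/matrixP => i j; rewrite mul_diag_mx mul_mx_diag !mxE hij.
by rewrite -mulmxA -e mulmxA mulVmx // mul1mx.
Qed.

Section Sim.
Variables (F : fieldType) (q : nat) (q0 : (0 < q)%N).
Local Notation s := (frob q).
Hypothesis h4 : forall x : F, s (s (s (s x))) = x.

Lemma nz4 (r : F) : r * s r * s (s r) * s (s (s r)) = 1 ->
  [/\ r != 0, s r != 0, s (s r) != 0 & s (s (s r)) != 0].
Proof.
move=> hN; have : r * s r * s (s r) * s (s (s r)) != 0 by rewrite hN oner_eq0.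
by rewrite !mulf_eq0 !negb_or => /andP[/andP[/andP[-> ->] ->] ->].
Qed.

Lemma simA (a b : 'I_4 -> F) r :
  r * s r * s (s r) * s (s (s r)) = 1 ->
  b (inord 0) = a (inord 0) -> b (inord 1) = a (inord 1) * r ->
  b (inord 2) = a (inord 2) * (r * s r) ->
  b (inord 3) = a (inord 3) * (r * s r * s (s r)) ->
  diag_similar (dickson_mx q a) (dickson_mx q b).
Proof.
move=> hN hb0 hb1 hb2 hb3; have [n0 n1 n2 n3] := nz4 hN.
have h3r : s (s (s r)) = (r * s r * s (s r))^-1.
  by apply: (mulfI (mulf_neq0 (mulf_neq0 n0 n1) n2)); rewrite hN divff // !mulf_neq0.
apply: (@dsim_of _ _ _ (fun k => nth 1 [:: 1; r; r * s r; r * s r * s (s r)] k)).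
  by case=> [|[|[|[|]]]] //= _; rewrite ?oner_eq0 ?mulf_neq0.
move=> i j; rewrite !dickE.
case: i => [[|[|[|[|i]]]] Hi]; last by [].
all: case: j => [[|[|[|[|j]]]] Hj]; last by [].
all: rewrite /= ?hb0 ?hb1 ?hb2 ?hb3 ?fM ?h4 ?h3r; field.
all: by rewrite ?n0 ?n1 ?n2 ?mulf_neq0.
Qed.

Lemma simT (a b : 'I_4 -> F) r :
  r * s r * s (s r) * s (s (s r)) = 1 ->
  b (inord 0) = a (inord 0) -> b (inord 1) = s (a (inord 3)) * r ->
  b (inord 2) = s (s (a (inord 2))) * (r * s r) ->
  b (inord 3) = s (s (s (a (inord 1)))) * (r * s r * s (s r)) ->
  diag_similar (dickson_mx q a)^T (dickson_mx q b).
Proof.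
move=> hN hb0 hb1 hb2 hb3; have [n0 n1 n2 n3] := nz4 hN.
have h3r : s (s (s r)) = (r * s r * s (s r))^-1.
  by apply: (mulfI (mulf_neq0 (mulf_neq0 n0 n1) n2)); rewrite hN divff // !mulf_neq0.
apply: (@dsim_of _ _ _ (fun k => nth 1 [:: 1; r; r * s r; r * s r * s (s r)] k)).
  by case=> [|[|[|[|]]]] //= _; rewrite ?oner_eq0 ?mulf_neq0.
move=> i j; rewrite !mxE !sub_idx !expq_iter.
case: i => [[|[|[|[|i]]]] Hi]; last by [].
all: case: j => [[|[|[|[|j]]]] Hj]; last by [].
all: rewrite /= ?hb0 ?hb1 ?hb2 ?hb3 ?fM ?h4 ?h3r; field.
all: by rewrite ?n0 ?n1 ?n2 ?mulf_neq0.
Qed.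
End Sim.

Section Ham.
Variable R : comRingType.
Definition sq (bs : seq bool) := [seq k <- iota 0 4 | nth false bs k].
Definition HamM (M : 'M[R]_4) :=
  let G x y := M (inord x) (inord y) in
  G 0 1 * G 1 2 * G 2 3 * G 3 0 + G 0 3 * G 3 2 * G 2 1 * G 1 0
  + G 0 1 * G 1 3 * G 3 2 * G 2 0 + G 0 2 * G 2 3 * G 3 1 * G 1 0
  + G 0 2 * G 2 1 * G 1 3 * G 3 0 + G 0 3 * G 3 1 * G 1 2 * G 2 0.
Definition Pm (M : 'M[R]_4) x y := M (inord x) (inord y) * M (inord y) (inord x).
Definition Dm (M : 'M[R]_4) x := M (inord x) (inord x).
Definition PhiF (d0 d1 d2 d3 p01 p02 p03 p12 p13 p23 m012 m013 m023 m123 dt : R) :=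
  let t012 := m012 - d0 * d1 * d2 + p01 * d2 + p02 * d1 + p12 * d0 in
  let t013 := m013 - d0 * d1 * d3 + p01 * d3 + p03 * d1 + p13 * d0 in
  let t023 := m023 - d0 * d2 * d3 + p02 * d3 + p03 * d2 + p23 * d0 in
  let t123 := m123 - d1 * d2 * d3 + p12 * d3 + p13 * d2 + p23 * d1 in
  - dt + d0 * d1 * d2 * d3
  - (p01 * d2 * d3 + p02 * d1 * d3 + p03 * d1 * d2 + p12 * d0 * d3 + p13 * d0 * d2 + p23 * d0 * d1)
  + t012 * d3 + t013 * d2 + t023 * d1 + t123 * d0 + (p01 * p23 + p02 * p13 + p03 * p12).
Lemma ham_formula (M : 'M[R]_4) :
  HamM M = PhiF (Dm M 0) (Dm M 1) (Dm M 2) (Dm M 3)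
    (Pm M 0 1) (Pm M 0 2) (Pm M 0 3) (Pm M 1 2) (Pm M 1 3) (Pm M 2 3)
    (det3f (MG M (sq [:: true; true; true; false])))
    (det3f (MG M (sq [:: true; true; false; true])))
    (det3f (MG M (sq [:: true; false; true; true])))
    (det3f (MG M (sq [:: false; true; true; true])))
    (det4f (MG M (sq [:: true; true; true; true]))).
Proof.
rewrite /HamM /PhiF /Dm /Pm /det4f /det3f /det2f /MG /sq /bump /=.
cbv [addn addn_rec leq subn subn_rec Nat.add Nat.sub eq_op]. simpl. ring.
Qed.
Lemma ham_eq (M N : 'M[R]_4) :
  (forall x, (x < 4)%N -> Dm M x = Dm N x) ->
  (forall x y, (x < 4)%N -> (y < 4)%N -> Pm M x y = Pm N x y) ->
  det3f (MG M (sq [:: true; true; true; false])) = det3f (MG N (sq [:: true; true; true; false])) ->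
  det3f (MG M (sq [:: true; true; false; true])) = det3f (MG N (sq [:: true; true; false; true])) ->
  det3f (MG M (sq [:: true; false; true; true])) = det3f (MG N (sq [:: true; false; true; true])) ->
  det3f (MG M (sq [:: false; true; true; true])) = det3f (MG N (sq [:: false; true; true; true])) ->
  det4f (MG M (sq [:: true; true; true; true])) = det4f (MG N (sq [:: true; true; true; true])) ->
  HamM M = HamM N.
Proof.
move=> hD hP h1 h2 h3 h4 h5; rewrite !ham_formula h1 h2 h3 h4 h5.
by rewrite !hD ?hP.
Qed.
End Ham.

Lemma bset_ne bs k : (k < 4)%N -> nth false bs k -> bset bs != set0.
Proof. by move=> hk hb; apply/set0Pn; exists (inord k); rewrite inE /= inordK. Qed.

Section PM.
Variable F : fieldType.
Lemma pm1 (M : 'M[F]_4) bs : size (sq bs) = 1%N ->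
  \det (principal_submx M (bset bs)) = MG M (sq bs) 0 0.
Proof. by move=> h; rewrite pminorE (det_gen1 _ (etrans (card_bset bs) h)). Qed.
Lemma pm2 (M : 'M[F]_4) bs : size (sq bs) = 2%N ->
  \det (principal_submx M (bset bs)) = det2f (MG M (sq bs)).
Proof. by move=> h; rewrite pminorE (det_gen2 _ (etrans (card_bset bs) h)). Qed.
Lemma pm3 (M : 'M[F]_4) bs : size (sq bs) = 3%N ->
  \det (principal_submx M (bset bs)) = det3f (MG M (sq bs)).
Proof. by move=> h; rewrite pminorE (det_gen3 _ (etrans (card_bset bs) h)). Qed.
Lemma pm4 (M : 'M[F]_4) bs : size (sq bs) = 4%N ->
  \det (principal_submx M (bset bs)) = det4f (MG M (sq bs)).
Proof. by move=> h; rewrite pminorE (det_gen4 _ (etrans (card_bset bs) h)). Qed.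
End PM.

Definition GA (F : ringType) q (a : 'I_4 -> F) x y := iter x (frob q) (a (inord (idx x y))).
Definition HamG (R : ringType) (G : nat -> nat -> R) :=
  G 0 1 * G 1 2 * G 2 3 * G 3 0 + G 0 3 * G 3 2 * G 2 1 * G 1 0
  + G 0 1 * G 1 3 * G 3 2 * G 2 0 + G 0 2 * G 2 3 * G 3 1 * G 1 0
  + G 0 2 * G 2 1 * G 1 3 * G 3 0 + G 0 3 * G 3 1 * G 1 2 * G 2 0.
Section GAE.
Variables (F : fieldType) (q : nat) (a : 'I_4 -> F).
Lemma DmE x : (x < 4)%N -> Dm (dickson_mx q a) x = GA q a x x.
Proof. by move=> hx; rewrite /GA -(dickI q a hx hx). Qed.
Lemma PmE x y : (x < 4)%N -> (y < 4)%N -> Pm (dickson_mx q a) x y = GA q a x y * GA q a y x.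
Proof. by move=> hx hy; rewrite /GA -(dickI q a hx hy) -(dickI q a hy hx). Qed.
Lemma HamME : HamM (dickson_mx q a) = HamG (GA q a).
Proof. by rewrite /HamG /GA -!dickI. Qed.
End GAE.

Lemma lc4 (R : comRingType) (k1 k2 k3 x e0 e1 e2 e3 : R) :
  e0 = 0 -> e1 = 0 -> e2 = 0 -> e3 = 0 -> x = e0 + k1 * e1 + k2 * e2 + k3 * e3 -> x = 0.
Proof. by move=> -> -> -> -> ->; rewrite !mulr0 !addr0. Qed.

Section Core.
Variables (F : fieldType) (q : nat) (q0 : (0 < q)%N).
Local Notation s := (frob q).
Hypothesis h4 : forall x : F, s (s (s (s x))) = x.
Variables (a b : 'I_4 -> F).
Local Notation c := (a (inord 0)).
Local Notation u := (a (inord 1)).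
Local Notation w := (a (inord 2)).
Local Notation v := (a (inord 3)).
Local Notation ub := (b (inord 1)).
Local Notation wb := (b (inord 2)).
Local Notation vb := (b (inord 3)).
Local Notation Nf x := (x * s x * s (s x) * s (s (s x))).
Hypothesis E1 : b (inord 0) = a (inord 0).

Ltac fld := field; repeat (apply/andP; split); try done.

Lemma ratio1 (x y z : F) : y != 0 -> x = y -> z = x / y -> z = 1.
Proof. by move=> yn -> ->; rewrite divff. Qed.

Lemma LemA1 : u != 0 -> ub != 0 -> Nf ub = Nf u ->
  wb = w * (ub * s ub / (u * s u)) -> s (s (s u)) * v = s (s (s ub)) * vb ->
  diag_similar (dickson_mx q a) (dickson_mx q b).
Proof.
move=> un ubn hN hw hv.
have [sun s2un s3un] : [/\ s u != 0, s (s u) != 0 & s (s (s u)) != 0] by rewrite !f_neq0.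
have [subn s2ubn s3ubn] : [/\ s ub != 0, s (s ub) != 0 & s (s (s ub)) != 0] by rewrite !f_neq0.
apply: (simA h4 (r := ub / u)) => //.
- apply: (ratio1 (x := Nf ub) (y := Nf u)) => //; first by rewrite !mulf_neq0.
  by rewrite !fM !fV; fld.
- by fld.
- by rewrite hw !fM !fV; fld.
- have -> : vb = s (s (s u)) * v / s (s (s ub)) by rewrite hv; fld.
  have -> : s (s (s u)) = Nf ub / (u * s u * s (s u)) by rewrite hN; fld.
  by rewrite !fM !fV; fld.
Qed.

Lemma LemT1 : v != 0 -> ub != 0 -> Nf ub = Nf v ->
  wb = s (s w) * (ub * s ub / (s v * s (s v))) -> s (s (s u)) * v = s (s (s ub)) * vb ->
  diag_similar (dickson_mx q a)^T (dickson_mx q b).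
Proof.
move=> vn ubn hN hw hv.
have [svn s2vn s3vn] : [/\ s v != 0, s (s v) != 0 & s (s (s v)) != 0] by rewrite !f_neq0.
have [subn s2ubn s3ubn] : [/\ s ub != 0, s (s ub) != 0 & s (s (s ub)) != 0] by rewrite !f_neq0.
apply: (simT h4 (r := ub / s v)) => //.
- apply: (ratio1 (x := Nf ub) (y := Nf v)) => //; first by rewrite !mulf_neq0.
  by rewrite !fM !fV h4; fld.
- by fld.
- by rewrite hw !fM !fV; fld.
- have -> : vb = s (s (s u)) * v / s (s (s ub)) by rewrite hv; fld.
  transitivity (s (s (s u)) * Nf v / (s (s (s ub)) * (s v * s (s v) * s (s (s v))))); first by fld.
  by rewrite -hN !fM !fV; fld.
Qed.

Lemma LemT2 : u != 0 -> vb != 0 -> v = 0 -> ub = 0 -> Nf vb = Nf u ->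
  wb = s (s w) * (u * s u / (s vb * s (s vb))) ->
  diag_similar (dickson_mx q a)^T (dickson_mx q b).
Proof.
move=> un vbn v0 ub0 hN hw.
have [sun s2un s3un] : [/\ s u != 0, s (s u) != 0 & s (s (s u)) != 0] by rewrite !f_neq0.
have [svbn s2vbn s3vbn] : [/\ s vb != 0, s (s vb) != 0 & s (s (s vb)) != 0] by rewrite !f_neq0.
apply: (simT h4 (r := u / s vb)) => //.
- apply: (ratio1 (x := Nf u) (y := Nf vb)) => //; first by rewrite !mulf_neq0.
  by rewrite !fM !fV h4; fld.
- by rewrite ub0 v0 (f0 _ q0) mul0r.
- by rewrite hw !fM !fV; fld.
- transitivity (Nf vb / (s vb * s (s vb) * s (s (s vb)))); first by fld.
  by rewrite hN !fM !fV; fld.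
Qed.

Lemma LemA2 : v != 0 -> vb != 0 -> u = 0 -> ub = 0 -> Nf vb = Nf v ->
  wb = w * (s v * s (s v) / (s vb * s (s vb))) ->
  diag_similar (dickson_mx q a) (dickson_mx q b).
Proof.
move=> vn vbn u0 ub0 hN hw.
have [svn s2vn s3vn] : [/\ s v != 0, s (s v) != 0 & s (s (s v)) != 0] by rewrite !f_neq0.
have [svbn s2vbn s3vbn] : [/\ s vb != 0, s (s vb) != 0 & s (s (s vb)) != 0] by rewrite !f_neq0.
apply: (simA h4 (r := s v / s vb)) => //.
- apply: (ratio1 (x := Nf v) (y := Nf vb)) => //; first by rewrite !mulf_neq0.
  by rewrite !fM !fV !h4; fld.
- by rewrite ub0 u0 mul0r.
- by rewrite hw !fM !fV; fld.
- transitivity (Nf vb / (s vb * s (s vb) * s (s (s vb)))); first by fld.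
  by rewrite hN !fM !fV ?h4; fld.
Qed.

Lemma eq_by (x y x' y' : F) : x' = y' -> x = x' -> y = y' -> x = y.
Proof. by move=> h -> ->. Qed.
Lemma solve_div (x y z : F) : y != 0 -> x * y = z -> x = z / y.
Proof. by move=> yn <-; rewrite mulfK. Qed.
Lemma Nf_neq0 (x : F) : x != 0 -> Nf x != 0.
Proof. by move=> xn; rewrite !mulf_neq0 ?f_neq0. Qed.
Lemma Nf_inv (x : F) : Nf x != 0 -> x != 0.
Proof. by apply: contraNneq => ->; rewrite !mul0r. Qed.
Lemma lc3 (k1 k2 k3 x e1 e2 e3 : F) :
  e1 = 0 -> e2 = 0 -> e3 = 0 -> x = k1 * e1 + k2 * e2 + k3 * e3 -> x = 0.
Proof. by move=> -> -> -> ->; rewrite !mulr0 !addr0. Qed.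
Lemma sub0 (x y : F) : x = y -> x - y = 0.
Proof. by move=> ->; rewrite subrr. Qed.

Lemma core :
  u * s v = ub * s vb ->
  w * s (s w) = wb * s (s wb) ->
  u * s u * s (s w) + w * s (s v) * s v = ub * s ub * s (s wb) + wb * s (s vb) * s vb ->
  w * s (s u) * s (s (s u)) + v * s (s (s v)) * s (s w) =
    wb * s (s ub) * s (s (s ub)) + vb * s (s (s vb)) * s (s wb) ->
  HamG (GA q a) = HamG (GA q b) ->
  u != 0 \/ v != 0 ->
  diag_similar (dickson_mx q a) (dickson_mx q b) \/
  diag_similar (dickson_mx q a)^T (dickson_mx q b).
Proof.
move=> H2a0 H2b0 H3 H3b H4 Hirr.
move: H4; rewrite /HamG /GA /idx /= => H4.
have H2a1 := congr1 (frob q) H2a0; rewrite !fM in H2a1.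
have H2a2 := congr1 (frob q) H2a1; rewrite !fM in H2a2.
have H2a3 := congr1 (frob q) H2a2; rewrite !fM !h4 in H2a3.
have fz := f0 F q0.
have [u0|un] := eqVneq u 0; have [v0|vn] := eqVneq v 0.
- by exfalso; case: Hirr; rewrite ?u0 ?v0 eqxx.
- move: H4 H3 H3b H2a0; rewrite u0 !fz !(mul0r, mulr0, add0r, addr0) => H4 H3 H3b H2a0.
  have [vb0|vbn] := eqVneq vb 0.
  + move: H4 H3b; rewrite vb0 !fz !(mul0r, mulr0, add0r, addr0) => H4 H3b.
    have hN : Nf ub = Nf v by symmetry; apply: (eq_by H4); ring.
    have ubn : ub != 0 by apply: Nf_inv; rewrite hN Nf_neq0.
    have [svn s2vn s3vn] : [/\ s v != 0, s (s v) != 0 & s (s (s v)) != 0] by rewrite !f_neq0.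
    have [subn s2ubn s3ubn] : [/\ s ub != 0, s (s ub) != 0 & s (s (s ub)) != 0] by rewrite !f_neq0.
    right; apply: LemT1 => //.
    have -> : wb = v * s (s (s v)) * s (s w) / (s (s ub) * s (s (s ub))).
      by apply: solve_div; [rewrite mulf_neq0 | rewrite H3b; ring].
    transitivity (s (s w) * Nf v / (s v * s (s v) * (s (s ub) * s (s (s ub))))); first by fld.
    by rewrite -hN; fld.
  + have ub0 : ub = 0.
      by move/esym/eqP: H2a0; rewrite mulf_eq0 (f_eq0 q0) (negbTE vbn) orbF => /eqP.
    move: H4 H3; rewrite ub0 !fz !(mul0r, mulr0, add0r, addr0) => H4 H3.
    have hN : Nf vb = Nf v by symmetry; apply: (eq_by H4); ring.
    have [svbn s2vbn s3vbn] : [/\ s vb != 0, s (s vb) != 0 & s (s (s vb)) != 0] by rewrite !f_neq0.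
    left; apply: LemA2 => //.
    have -> : wb = w * s (s v) * s v / (s (s vb) * s vb).
      by apply: solve_div; [rewrite mulf_neq0 | rewrite H3; ring].
    by fld.
- move: H4 H3 H3b H2a0; rewrite v0 !fz !(mul0r, mulr0, add0r, addr0) => H4 H3 H3b H2a0.
  have [sun s2un s3un] : [/\ s u != 0, s (s u) != 0 & s (s (s u)) != 0] by rewrite !f_neq0.
  have [ub0|ubn] := eqVneq ub 0.
  + move: H4 H3; rewrite ub0 !fz !(mul0r, mulr0, add0r, addr0) => H4 H3.
    have hN : Nf vb = Nf u by symmetry; apply: (eq_by H4); ring.
    have vbn : vb != 0 by apply: Nf_inv; rewrite hN Nf_neq0.
    have [svbn s2vbn s3vbn] : [/\ s vb != 0, s (s vb) != 0 & s (s (s vb)) != 0] by rewrite !f_neq0.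
    right; apply: LemT2 => //.
    have -> : wb = u * s u * s (s w) / (s (s vb) * s vb).
      by apply: solve_div; [rewrite mulf_neq0 | rewrite H3; ring].
    by fld.
  + have vb0 : vb = 0.
      by move/esym/eqP: H2a0; rewrite mulf_eq0 (f_eq0 q0) (negbTE ubn) /= => /eqP.
    move: H4 H3b; rewrite vb0 !fz !(mul0r, mulr0, add0r, addr0) => H4 H3b.
    have hN : Nf ub = Nf u by symmetry; apply: (eq_by H4); ring.
    have [subn s2ubn s3ubn] : [/\ s ub != 0, s (s ub) != 0 & s (s (s ub)) != 0] by rewrite !f_neq0.
    left; apply: LemA1 => //.
    have -> : wb = w * s (s u) * s (s (s u)) / (s (s ub) * s (s (s ub))).
      by apply: solve_div; [rewrite mulf_neq0 | rewrite H3b; ring].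
    transitivity (w * Nf u / (u * s u * (s (s ub) * s (s (s ub))))); first by fld.
    by rewrite -hN; fld.
- have : ub * s vb != 0 by rewrite -H2a0 mulf_neq0 ?f_neq0.
  rewrite mulf_eq0 negb_or (f_eq0 q0) => /andP[ubn vbn].
  have [sun s2un s3un] : [/\ s u != 0, s (s u) != 0 & s (s (s u)) != 0] by rewrite !f_neq0.
  have [subn s2ubn s3ubn] : [/\ s ub != 0, s (s ub) != 0 & s (s (s ub)) != 0] by rewrite !f_neq0.
  have [svn s2vn s3vn] : [/\ s v != 0, s (s v) != 0 & s (s (s v)) != 0] by rewrite !f_neq0.
  have [w0|wn] := eqVneq w 0.
  + have wb0 : wb = 0.
      by move/esym/eqP: H2b0; rewrite w0 mul0r mulf_eq0 !(f_eq0 q0) orbb => /eqP.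
    move: H4; rewrite w0 wb0 !fz !(mul0r, mulr0, add0r, addr0) => H4.
    have e1 : (Nf ub + Nf vb) - (Nf u + Nf v) = 0.
      by apply: sub0; symmetry; apply: (eq_by H4); ring.
    have e2 : Nf u * Nf v - Nf ub * Nf vb = 0.
      apply: sub0.
      transitivity ((u * s v) * (s u * s (s v)) * (s (s u) * s (s (s v))) * (s (s (s u)) * v)); first by ring.
      by rewrite H2a0 H2a1 H2a2 H2a3; ring.
    have : (Nf ub - Nf u) * (Nf ub - Nf v) = 0.
      transitivity (Nf ub * ((Nf ub + Nf vb) - (Nf u + Nf v)) + (Nf u * Nf v - Nf ub * Nf vb)); first by ring.
      by rewrite e1 e2 mulr0 addr0.
    move/eqP; rewrite mulf_eq0 !subr_eq0 => /orP[/eqP hX|/eqP hX].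
    * by left; apply: LemA1 => //; rewrite w0 wb0 mul0r.
    * by right; apply: LemT1 => //; rewrite w0 wb0 !fz mul0r.
  + have : wb * s (s wb) != 0 by rewrite -H2b0 mulf_neq0 ?f_neq0.
    rewrite mulf_eq0 negb_or => /andP[wbn _].
    have ws2wn : w * s (s w) != 0 by rewrite mulf_neq0 ?f_neq0.
    have e1 : (u * s u) * (s v * s (s v)) - (ub * s ub) * (s vb * s (s vb)) = 0.
      apply: sub0; transitivity ((u * s v) * (s u * s (s v))); first by ring.
      by rewrite H2a0 H2a1; ring.
    have e2 := sub0 H2b0; have e3 := sub0 H3.
    have : (wb * (u * s u) - w * (ub * s ub)) * (wb * (s v * s (s v)) - s (s w) * (ub * s ub)) = 0.
      apply: (lc3 (k1 := wb ^+ 2) (k2 := (ub * s ub) ^+ 2) (k3 := - (wb * (ub * s ub))) e1 e2 e3).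
      by ring.
    move/eqP; rewrite mulf_eq0 !subr_eq0 => /orP[/eqP hB|/eqP hB].
    * have hB2 := congr1 (frob q \o frob q) hB; rewrite /= !fM ?h4 in hB2.
      have hN : Nf ub = Nf u.
        apply: (mulfI ws2wn).
        transitivity ((w * (ub * s ub)) * (s (s w) * (s (s ub) * s (s (s ub))))); first by ring.
        rewrite -hB -hB2; transitivity ((wb * s (s wb)) * Nf u); first by ring.
        by rewrite -H2b0; ring.
      left; apply: LemA1 => //.
      by rewrite mulrA; apply: solve_div; rewrite ?mulf_neq0.
    * have hB2 := congr1 (frob q \o frob q) hB; rewrite /= !fM ?h4 in hB2.
      have hN : Nf ub = Nf v.
        apply: (mulfI ws2wn).
        transitivity ((s (s w) * (ub * s ub)) * (w * (s (s ub) * s (s (s ub))))); first by ring.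
        rewrite -hB -hB2; transitivity ((wb * s (s wb)) * Nf v); first by ring.
        by rewrite -H2b0; ring.
      right; apply: LemT1 => //.
      by rewrite mulrA; apply: solve_div; rewrite ?mulf_neq0.
Qed.
End Core.

Theorem mainTheorem11 (F : finFieldType) (q : nat) (hF : #|F| = (q ^ 4)%N)
  (a b : 'I_4 -> F) :
  irreducible_mx (dickson_mx q a) ->
  equal_principal_minors (dickson_mx q a) (dickson_mx q b) ->
  diag_similar (dickson_mx q a) (dickson_mx q b) \/
  diag_similar (dickson_mx q a)^T (dickson_mx q b).
Proof.
move=> irr eqm.
have q0 : (0 < q)%N.
  rewrite lt0n; apply/eqP => q0; have : (0 < #|F|)%N by apply/card_gt0P; exists 0.
  by rewrite hF q0 exp0n.
have h4 : forall x : F, frob q (frob q (frob q (frob q x))) = x.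
  by move=> x; rewrite -[_ (_ (_ (_ x)))]/(iter 4 (frob q) x) -expq_iter -hF expf_card.
have e0 := eqm _ (@bset_ne [:: true] 0 isT isT).
rewrite !pm1 // /MG /= !dickI // /idx /= in e0.
have e01 := eqm _ (@bset_ne [:: true; true] 0 isT isT).
rewrite !pm2 // /det2f /MG /= !dickI // /idx /= in e01.
have e02 := eqm _ (@bset_ne [:: true; false; true] 0 isT isT).
rewrite !pm2 // /det2f /MG /= !dickI // /idx /= in e02.
have e012 := eqm _ (@bset_ne [:: true; true; true; false] 0 isT isT).
rewrite !pm3 // in e012.
have e013 := eqm _ (@bset_ne [:: true; true; false; true] 0 isT isT).
rewrite !pm3 // in e013.
have e023 := eqm _ (@bset_ne [:: true; false; true; true] 0 isT isT).
rewrite !pm3 // in e023.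
have e123 := eqm _ (@bset_ne [:: false; true; true; true] 1 isT isT).
rewrite !pm3 // in e123.
have eT := eqm _ (@bset_ne [:: true; true; true; true] 0 isT isT).
rewrite !pm4 // in eT.
have E1 : b (inord 0) = a (inord 0) by [].
have H2a0 : a (inord 1) * frob q (a (inord 3)) = b (inord 1) * frob q (b (inord 3)).
  by move: e01; rewrite -E1 => /addrI/oppr_inj.
have H2b0 : a (inord 2) * frob q (frob q (a (inord 2))) = b (inord 2) * frob q (frob q (b (inord 2))).
  by move: e02; rewrite -E1 => /addrI/oppr_inj.
have H2a1 := congr1 (frob q) H2a0; rewrite !fM in H2a1.
have H2a2 := congr1 (frob q) H2a1; rewrite !fM in H2a2.
have H2a3 := congr1 (frob q) H2a2; rewrite !fM !h4 in H2a3.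
have H2b1 := congr1 (frob q) H2b0; rewrite !fM in H2b1.
have H2b3 := congr1 (frob q) H2b1; rewrite !fM ?h4 in H2b3.
have H4 : HamG (GA q a) = HamG (GA q b).
{ rewrite -!HamME; apply: ham_eq => //.
    by move=> x; case: x => [|[|[|[|x]]]] // _; rewrite !DmE // /GA /idx /= E1.
  move=> x y; case: x => [|[|[|[|x]]]] // _; case: y => [|[|[|[|y]]]] // _.
  all: rewrite (PmE q a) // (PmE q b) // /GA /idx /= ?E1 //.
  all: by rewrite [LHS]mulrC [RHS]mulrC. }
have H3 := e012; move: H3.
rewrite /det3f /det2f /MG /sq /bump /=.
cbv [addn addn_rec leq subn subn_rec Nat.add Nat.sub eq_op]; simpl.
rewrite !dickI // /idx /= -!E1 => H3.
have H3' : a (inord 1) * frob q (a (inord 1)) * frob q (frob q (a (inord 2)))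
   + a (inord 2) * frob q (frob q (a (inord 3))) * frob q (a (inord 3)) =
   b (inord 1) * frob q (b (inord 1)) * frob q (frob q (b (inord 2)))
   + b (inord 2) * frob q (frob q (b (inord 3))) * frob q (b (inord 3)).
  apply/eqP; rewrite -subr_eq0; apply/eqP.
  have d0 : a (inord 1) * frob q (a (inord 3)) - b (inord 1) * frob q (b (inord 3)) = 0 by rewrite H2a0 subrr.
  have d1 : frob q (a (inord 1)) * frob q (frob q (a (inord 3))) - frob q (b (inord 1)) * frob q (frob q (b (inord 3))) = 0 by rewrite H2a1 subrr.
  have d2 : a (inord 2) * frob q (frob q (a (inord 2))) - b (inord 2) * frob q (frob q (b (inord 2))) = 0 by rewrite H2b0 subrr.
  move/eqP: H3; rewrite -subr_eq0 => /eqP H3.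
  apply: (lc4 (k1 := b (inord 0)) (k2 := frob q (frob q (b (inord 0)))) (k3 := frob q (b (inord 0))) H3 d1 d0 d2).
  ring.
have H3b := e023; move: H3b.
rewrite /det3f /det2f /MG /sq /bump /=.
cbv [addn addn_rec leq subn subn_rec Nat.add Nat.sub eq_op]; simpl.
rewrite !dickI // /idx /= -!E1 => H3b.
have H3b' : a (inord 2) * frob q (frob q (a (inord 1))) * frob q (frob q (frob q (a (inord 1))))
   + a (inord 3) * frob q (frob q (frob q (a (inord 3)))) * frob q (frob q (a (inord 2))) =
   b (inord 2) * frob q (frob q (b (inord 1))) * frob q (frob q (frob q (b (inord 1))))
   + b (inord 3) * frob q (frob q (frob q (b (inord 3)))) * frob q (frob q (b (inord 2))).
  apply/eqP; rewrite -subr_eq0; apply/eqP.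
  have d0 := sub0 H2b0; have d1 := sub0 H2a3; have d2 := sub0 H2a2.
  move/eqP: H3b; rewrite -subr_eq0 => /eqP H3b.
  apply: (lc4 (k1 := frob q (frob q (frob q (b (inord 0))))) (k2 := frob q (frob q (b (inord 0)))) (k3 := b (inord 0)) H3b d0 d1 d2).
  ring.
have Hirr : a (inord 1) != 0 \/ a (inord 3) != 0.
{ case: (eqVneq (a (inord 1)) 0) => [u0|]; last by left.
  case: (eqVneq (a (inord 3)) 0) => [v0|]; last by right.
  exfalso; apply: irr; exists (bset [:: true; false; true; false]); split.
  - exact: (@bset_ne _ 0).
  - by apply/set0Pn; exists (inord 1); rewrite !inE /= inordK.
  move=> i j; rewrite !inE /=.
  case: i => [[|[|[|[|i]]]] Hi] //; case: j => [[|[|[|[|j]]]] Hj] //= _ _.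
  all: by rewrite dickE /idx /= ?u0 ?v0 ?(f0 F q0). }
exact: (core q0 h4 E1 H2a0 H2b0 H3' H3b' H4 Hirr).
Qed.
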